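(* There exist infinitely many circles $(x-h)^2+y^2=a^2$ with $h,a\in\mathbb{Q}$, $a>0$, for which the ratios $h/a$ are pairwise distinct, such that each of them carries four rational points $(x_i,y_i)$, $i=1,\dots,4$, with $x_{i+1}=\tfrac{5}{3}x_i$ for $i=1,2,3$, whose fourth point is $(x_4,y_4)=(h+a,0)$ and whose first point $(x_1,y_1)$ does not lie on the $x$-axis.
   Context: Rational points are points with both coordinates in $\mathbb{Q}$. *)

(* Defs.v *)
From mathcomp Require Import all_boot all_order all_algebra.
Set Implicit Arguments. Unset Strict Implicit. Unset Printing Implicit Defensive.
Import Order.TTheory GRing.Theory Num.Theory.
Local Open Scope ring_scope.

Definition on_circle (h a x y : rat) : Prop := (x - h) ^+ 2 + y ^+ 2 = a ^+ 2.

Definition good_circle (h a : rat) : Prop :=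
  0 < a /\
  exists x1 x2 x3 x4 y1 y2 y3 y4 : rat,
    [/\ on_circle h a x1 y1, on_circle h a x2 y2,
        on_circle h a x3 y3 & on_circle h a x4 y4] /\
    [/\ x2 = 5%:R / 3%:R * x1, x3 = 5%:R / 3%:R * x2 & x4 = 5%:R / 3%:R * x3] /\
    [/\ x4 = h + a, y4 = 0 & y1 <> 0].

(* Main.v *)
Require Import Defs.
From mathcomp Require Import all_boot all_order all_algebra ring lra.
Import Order.TTheory GRing.Theory Num.Theory.
Local Open Scope ring_scope.

Section P.
Variable R : comNzRingType.
Definition Psi (X Z : R) := 3*X^+4 + 48*X^+3*Z - 6*540*X^+2*Z^+2 - 540^+2*Z^+4.
Definition Phi (X Z : R) := X^+9 + 12*540*X^+7*Z^+2 + 96*540*X^+6*Z^+3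
  + 30*540^+2*X^+5*Z^+4 + 576*540^+2*X^+4*Z^+5 - 48*357*540^+2*X^+3*Z^+6
  - 288*540^+3*X^+2*Z^+7 + 9*540^+4*X*Z^+8.
Definition G18 (X Z : R) := X^+4 - 72*X^+3*Z - 6*540*X^+2*Z^+2 - 120*540*X*Z^+3 + 540^+2*Z^+4.
Definition G0 (X Z : R) := X^+4 + 6*540*X^+2*Z^+2 + 48*540*X*Z^+3 - 3*540^+2*Z^+4.
Definition Gm (X Z : R) := X^+4 + 120*X^+3*Z - 6*540*X^+2*Z^+2 + 72*540*X*Z^+3 + 540^+2*Z^+4.

Lemma id18 X Z : Phi X Z - 18*Z*Psi X Z^+2 = (X - 18*Z)*G18 X Z^+2.
Proof. rewrite /Phi /Psi /G18. ring. Qed.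
Lemma id0 X Z : Phi X Z = X*G0 X Z^+2.
Proof. rewrite /Phi /G0. ring. Qed.
Lemma idm X Z : Phi X Z + 30*Z*Psi X Z^+2 = (X + 30*Z)*Gm X Z^+2.
Proof. rewrite /Phi /Psi /Gm. ring. Qed.
End P.
Arguments Psi {R}. Arguments Phi {R}. Arguments G18 {R}. Arguments G0 {R}. Arguments Gm {R}.

Lemma castPhi (X Z : int) : (Phi X Z)%:~R = Phi (X%:~R : rat) Z%:~R.
Proof. rewrite /Phi. ring. Qed.
Lemma castPsi (X Z : int) : (Psi X Z)%:~R = Psi (X%:~R : rat) Z%:~R.
Proof. rewrite /Psi. ring. Qed.
Fixpoint XZ (n : nat) : int * int :=
  match n with
  | 0%N => (20, 1)
  | n'.+1 => let p := XZ n' in (Phi p.1 p.2, p.2 * Psi p.1 p.2 ^+ 2)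
  end.
Definition Xn n := (XZ n).1.
Definition Zn n := (XZ n).2.
Definition xr n : rat := (Xn n)%:~R / (Zn n)%:~R.

Lemma XnS n : Xn n.+1 = Phi (Xn n) (Zn n). Proof. by []. Qed.
Lemma ZnS n : Zn n.+1 = Zn n * Psi (Xn n) (Zn n) ^+ 2. Proof. by []. Qed.

Lemma Psi3 (X Z : int) : Psi X Z = 3 * (X^+4 + 16*X^+3*Z - 1080*X^+2*Z^+2 - 180*540*Z^+4).
Proof. rewrite /Psi. ring. Qed.
Lemma Phi3 (X Z : int) : Phi X Z = X^+9 + 3 * (4*540*X^+7*Z^+2 + 32*540*X^+6*Z^+3
  + 10*540^+2*X^+5*Z^+4 + 192*540^+2*X^+4*Z^+5 - 16*357*540^+2*X^+3*Z^+6
  - 96*540^+3*X^+2*Z^+7 + 3*540^+4*X*Z^+8).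
Proof. rewrite /Phi. ring. Qed.
Lemma Psi3z (X z : int) : Psi X (3*z) = 3 * (X^+4 + 3 * (16*X^+3*z - 3240*X^+2*z^+2 - 9*540^+2*z^+4)).
Proof. rewrite /Psi. ring. Qed.

Lemma nd3X (X A : int) (k : nat) : ~~ (3 %| X)%Z -> ~~ (3 %| X^+k.+1 + 3 * A)%Z.
Proof.
move=> h; rewrite rpredDr; last by apply: dvdz_mulr; rewrite dvdzz.
by rewrite dvdzE abszX Euclid_dvdX // -dvdzE (negbTE h).
Qed.

Lemma nd3n n : ~~ (3 %| Xn n)%Z.
Proof.
elim: n => [|n IH]; first by [].
by rewrite XnS Phi3 nd3X.
Qed.

Lemma d3Z n : (3 %| Zn n.+1)%Z.
Proof. by rewrite ZnS Psi3 dvdz_mull // expr2 dvdz_mull // dvdz_mulr // dvdzz. Qed.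

Lemma Psinz n : Psi (Xn n) (Zn n) != 0.
Proof.
case: n => [|n].
  change (Psi (20:int) 1 != 0); apply: ltr0_neq0; rewrite /Psi; lra.
have /dvdzP [z hz] := d3Z n.
rewrite hz mulrC Psi3z; apply/negP => /eqP h.
have := nd3X (Xn n.+1) (16 * Xn n.+1 ^+ 3 * z - 3240 * Xn n.+1 ^+ 2 * z ^+ 2 - 9 * 540 ^+ 2 * z ^+ 4) 3 (nd3n n.+1).
have -> : Xn n.+1 ^+ 4 + 3 * (16 * Xn n.+1 ^+ 3 * z - 3240 * Xn n.+1 ^+ 2 * z ^+ 2 - 9 * 540 ^+ 2 * z ^+ 4) = 0.
  by move/eqP: h; rewrite mulf_eq0 => /orP [] // /eqP.
by rewrite dvdz0.
Qed.

Lemma Znz n : Zn n != 0.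
Proof.
elim: n => [|n IH]; first by [].
by rewrite ZnS mulf_neq0 // expf_neq0 // Psinz.
Qed.

Definition XR n : rat := (Xn n)%:~R.
Definition ZR n : rat := (Zn n)%:~R.
Fixpoint s1 n : rat := match n with 0%N => 1/7 | n'.+1 => s1 n' * G18 (XR n') (ZR n') / Psi (XR n') (ZR n') end.
Fixpoint s2 n : rat := match n with 0%N => 1/2 | n'.+1 => s2 n' * G0 (XR n') (ZR n') / Psi (XR n') (ZR n') end.
Fixpoint s3 n : rat := match n with 0%N => 1 | n'.+1 => s3 n' * Gm (XR n') (ZR n') / Psi (XR n') (ZR n') end.

Lemma stepL (X Z e k s G : rat) : Z != 0 -> Psi X Z != 0 -> X/Z - e = k*s^+2 ->
  Phi X Z - e*Z*Psi X Z^+2 = (X - e*Z)*G^+2 ->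
  Phi X Z/(Z*Psi X Z^+2) - e = k*(s*G/Psi X Z)^+2.
Proof.
move=> hZ hP h hid.
have -> : Phi X Z/(Z*Psi X Z^+2) - e = (Phi X Z - e*Z*Psi X Z^+2)/(Z*Psi X Z^+2).
  field. by rewrite hZ hP.
rewrite hid.
have -> : X - e*Z = Z*(X/Z - e).
  field. by [].
rewrite h. field. by rewrite hZ hP.
Qed.

Lemma ZRnz n : ZR n != 0. Proof. by rewrite /ZR intr_eq0 Znz. Qed.
Lemma PsiRnz n : Psi (XR n) (ZR n) != 0. Proof. by rewrite /XR /ZR -castPsi intr_eq0 Psinz. Qed.
Lemma xrS n : xr n.+1 = Phi (XR n) (ZR n) / (ZR n * Psi (XR n) (ZR n) ^+ 2).
Proof. by rewrite /xr XnS ZnS castPhi rmorphM rmorphXn /= castPsi. Qed.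

Lemma inv n : [/\ xr n - 18 = 98 * s1 n ^+ 2, xr n - 0 = 80 * s2 n ^+ 2 & xr n - (-30) = 50 * s3 n ^+ 2].
Proof.
elim: n => [|n [h1 h2 h3]].
  rewrite /xr /Xn /Zn /=. by split; rewrite ?divr1; field.
rewrite xrS; split.
- apply: (@stepL _ _ _ _ _ (G18 (XR n) (ZR n)) (ZRnz n) (PsiRnz n)); first by rewrite -h1.
  exact: id18.
- apply: (@stepL _ _ _ _ _ (G0 (XR n) (ZR n)) (ZRnz n) (PsiRnz n)); first by rewrite -h2.
  by rewrite id0 mul0r mul0r subr0 subr0.
- apply: (@stepL _ _ _ _ _ (Gm (XR n) (ZR n)) (ZRnz n) (PsiRnz n)); first by rewrite -h3.
  move: (@idm _ (XR n) (ZR n)).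
  set P := Phi _ _; set Q := Psi _ _; set G := Gm _ _; set X := XR n; set Z := ZR n => hm.
  rewrite (_ : P = (X+30*Z)*G^+2 - 30*Z*Q^+2); last by rewrite -hm; ring.
  ring.
Qed.

Definition Ups (X Z : int) : int := X^+4 + 16*X^+3*Z - 1080*X^+2*Z^+2 - 180*540*Z^+4.
Lemma PsiSq (X Z : int) : Psi X Z ^+ 2 = 9 * Ups X Z ^+ 2.
Proof. rewrite /Psi /Ups. ring. Qed.

Lemma Zmul m d : exists W, Zn (m + d) = Zn m * 9 ^+ d * W.
Proof.
elim: d => [|d [W hW]]; first by exists 1; rewrite addn0 expr0 !mulr1.
rewrite addnS ZnS hW PsiSq.
exists (W * Ups (Xn (m + d)) (Zn m * 9 ^+ d * W) ^+ 2).
rewrite [9 ^+ d.+1]exprS. set E := (9 ^+ d). set U := Ups _ _. clearbody E U. ring.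
Qed.

Lemma xr_inj m n : (m < n)%N -> xr m != xr n.
Proof.
move=> lt; apply/negP.
rewrite /xr eqr_div ?intr_eq0 ?Znz // -!intrM eqr_int => /eqP h.
have [W hW] := Zmul m (n - m).
rewrite subnKC ?(ltnW lt) // in hW.
rewrite hW in h.
have hX : Xn n = Xn m * 9 ^+ (n - m) * W.
  apply: (mulIf (Znz m)). rewrite -h. ring.
have := nd3n n; rewrite hX.
case: (n - m)%N (subn_gt0 m n) => [|d _]; first by rewrite lt.
by rewrite exprS dvdz_mulr // dvdz_mull // dvdz_mulr // (_ : (9:int) = 3 * 3) // dvdz_mulr // dvdzz.
Qed.

Lemma xr_ne n (k : int) : xr n.+1 != k%:~R.
Proof.
apply/negP => /eqP h.
have h' : (Xn n.+1)%:~R = (k * Zn n.+1)%:~R :> rat.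
  rewrite intrM -h /xr; field. exact: (ZRnz n.+1).
have := nd3n n.+1; rewrite (intr_inj h').
by rewrite dvdz_mull // d3Z.
Qed.

Lemma circ (x e k s xi : rat) : x + 80 != 0 -> e + 80 = k -> x - e = k * s^+2 ->
  xi = (250 - 2*k)/(x+80) -> on_circle (250/(x+80) - 1) 1 xi (2*k*s/(x+80)).
Proof.
move=> hD hk hs ->; rewrite /on_circle.
rewrite (_ : (2*k*s/(x+80))^+2 = 4*k*(k*s^+2)/(x+80)^+2); last by field.
rewrite -hs -hk. field. by [].
Qed.

Lemma good_of (x s1 s2 s3 : rat) : x + 80 != 0 -> x != 18 -> x - 18 = 98*s1^+2 ->
  x - 0 = 80*s2^+2 -> x - (-30) = 50*s3^+2 -> good_circle (250/(x+80) - 1) 1.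
Proof.
move=> hD h18 e1 e2 e3.
split; first by [].
exists (54/(x+80)), (90/(x+80)), (150/(x+80)), (250/(x+80)),
  (2*98*s1/(x+80)), (2*80*s2/(x+80)), (2*50*s3/(x+80)), 0.
split; [split|split].
- apply: (circ _ _ _ _ _ hD _ e1); first lra.
  field. by [].
- apply: (circ _ _ _ _ _ hD _ e2); first lra.
  field. by [].
- apply: (circ _ _ _ _ _ hD _ e3); first lra.
  field. by [].
- rewrite /on_circle; ring.
- by split; field.
- split; first ring.
  + by [].
  + move=> hy.
    have hs : s1 = (x+80)/(2*98) * (2*98*s1/(x+80)) by field.
    rewrite hy mulr0 in hs.
    move: e1; rewrite hs expr0n mulr0 => /eqP.
    by rewrite subr_eq0 (negbTE h18).
Qed.

Lemma hD80 k : xr k.+1 + 80 != 0.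
Proof. rewrite addr_eq0; have := xr_ne k (-80). by rewrite (_ : (-80)%:~R = -80 :> rat). Qed.

Lemma hinj (a b : rat) : a + 80 != 0 -> b + 80 != 0 -> 250/(a+80) - 1 = 250/(b+80) - 1 -> a = b.
Proof.
move=> ha hb /addIr h.
have : a + 80 = b + 80.
  have -> : a + 80 = 250 / (250 / (a + 80)) by field.
  by rewrite h; field.
by move/addIr.
Qed.

Theorem mainTheorem3 :
  exists c : nat -> rat * rat,
    (forall n, good_circle (c n).1 (c n).2) /\
    (forall m n, m <> n -> (c m).1 / (c m).2 <> (c n).1 / (c n).2).
Proof.
exists (fun n => (250/(xr n.+1 + 80) - 1, 1)); split.
  move=> n /=; have [h1 h2 h3] := inv n.+1.
  apply: (good_of _ _ _ _ (hD80 n) _ h1 h2 h3).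
  exact: (xr_ne n 18).
move=> m n hmn /=; rewrite !divr1 => h.
have := hinj _ _ (hD80 m) (hD80 n) h.
move=> hx; case: (ltngtP m n) => [lt|lt|eq].
- by move/eqP: hx; rewrite (negbTE (xr_inj m.+1 n.+1 lt)).
- by move/esym/eqP: hx; rewrite (negbTE (xr_inj n.+1 m.+1 lt)).
- exact: hmn eq.
Qed.
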